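(* Let $\lambda=(\lambda_1,\dots,\lambda_I)$, $\mu=(\mu_1,\dots,\mu_J)$ be partitions of $n$ and $(T_t)_{t\ge0}$ the random transpositions chain on $\mathcal{T}_{\lambda,\mu}$. For $1\le i,k\le I$, $1\le j,l\le J$ and $\mathbf{x}\in\mathcal{T}_{\lambda,\mu}$: if $i\ne k$, $j\ne l$, \[ \mathbb{E}[T_1(i,j)T_1(k,l)\mid T_0=\mathbf{x}]=x_{ij}x_{kl}\left(1-\frac4n+\frac2{n^2}\right)+\frac2{n^2}\left(x_{kl}\lambda_i\mu_j+x_{ij}\lambda_k\mu_l+x_{il}x_{kj}\right); \] if $i\ne k$, $j=l$, \[ \mathbb{E}[T_1(i,j)T_1(k,j)\mid T_0=\mathbf{x}]=x_{ij}x_{kj}\left(1-\frac4n+\frac4{n^2}\right)+\frac2{n^2}\left(x_{kj}(\lambda_i\mu_j-\lambda_i)+x_{ij}(\lambda_k\mu_j-\lambda_k)\right); \] if $i=k$, $j=l$, \[ \mathbb{E}[T_1(i,j)^2\mid T_0=\mathbf{x}]=x_{ij}^2\left(1-\frac4n+\frac4{n^2}\right)+\frac2{n^2}\left(x_{ij}(2\lambda_i\mu_j-2\lambda_i-2\mu_j+n)+\lambda_i\mu_j\right). \]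
   Context: $\mathcal{T}_{\lambda,\mu}$ is the set of $I\times J$ nonnegative integer tables $\mathbf{x}=(x_{ij})$ with row sums $\lambda_i$ and column sums $\mu_j$; $T_t(i,j)$ is the $(i,j)$ entry at time $t$. The random transpositions chain: for $T'$ obtained from $T$ by subtracting $1$ at cells $(i_1,j_1),(i_2,j_2)$ and adding $1$ at $(i_1,j_2),(i_2,j_1)$ (with $i_1\ne i_2$, $j_1\ne j_2$), $P(T,T')=2T_{i_1j_1}T_{i_2j_2}/n^2$; $P(T,T)$ is the remaining mass. *)

(* Defs.v *)
From mathcomp Require Import all_boot all_order all_algebra.
Set Implicit Arguments. Unset Strict Implicit. Unset Printing Implicit Defensive.
Import Order.TTheory GRing.Theory Num.Theory.
Local Open Scope ring_scope.

Definition is_partition (I n : nat) (lam : 'I_I -> nat) : Prop :=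
  [/\ (\sum_(i < I) lam i)%N = n,
      (forall i, (0 < lam i)%N) &
      (forall i j : 'I_I, (i <= j)%N -> (lam j <= lam i)%N)].

(* An I x J table with nonnegative integer entries; entries are bounded by n
   (automatic for tables with margins summing to n). *)
Definition table (I J n : nat) := {ffun 'I_I * 'I_J -> 'I_n.+1}.

Definition ent (I J n : nat) (T : table I J n) (i : 'I_I) (j : 'I_J) : nat :=
  nat_of_ord (T (i, j)).

Definition tables (I J n : nat) (lam : 'I_I -> nat) (mu : 'I_J -> nat)
  : {set table I J n} :=
  [set T : table I J n | [forall i, (\sum_(j < J) ent T i j == lam i)%N]
                      && [forall j, (\sum_(i < I) ent T i j == mu j)%N]].

Definition is_move (I J n : nat) (T : table I J n)
  (q : 'I_I * 'I_J * 'I_I * 'I_J) (T' : table I J n) : bool :=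
  let: (i1, j1, i2, j2) := q in
  [&& i1 != i2, j1 != j2 &
   [forall a, forall b,
     (ent T' a b + ((a == i1) && (b == j1)) + ((a == i2) && (b == j2)))%N
     == (ent T a b + ((a == i1) && (b == j2)) + ((a == i2) && (b == j1)))%N]].

Definition rt_off (R : fieldType) (I J n : nat) (T T' : table I J n) : R :=
  match [pick q | is_move T q T'] with
  | Some q => let: (i1, j1, i2, j2) := q in
      2 * (ent T i1 j1)%:R * (ent T i2 j2)%:R / (n%:R ^+ 2)
  | None => 0
  end.

Definition rt_P (R : fieldType) (I J n : nat) (lam : 'I_I -> nat)
  (mu : 'I_J -> nat) (T T' : table I J n) : R :=
  if T' == T then
    1 - \sum_(T'' in tables n lam mu | T'' != T) rt_off R T T''
  else rt_off R T T'.

Definition rt_E (R : fieldType) (I J n : nat) (lam : 'I_I -> nat)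
  (mu : 'I_J -> nat) (x : table I J n) (f : table I J n -> R) : R :=
  \sum_(T' in tables n lam mu) rt_P R lam mu x T' * f T'.

(* Main.v *)
Require Import Defs.
From mathcomp Require Import all_boot all_order all_algebra.
Import Order.TTheory GRing.Theory Num.Theory.
Local Open Scope ring_scope.
From mathcomp Require Import zify ring lra.

Section S.
Variables (R : realFieldType) (n I J : nat) (lam : 'I_I -> nat) (mu : 'I_J -> nat) (x : table I J n).
Hypothesis hx : x \in tables n lam mu.
Hypothesis hlam : (\sum_(i < I) lam i == n)%N.

Ltac simpl_eqs := repeat match goal with
 | H : is_true (?u != ?u) |- _ => by rewrite eqxx in H
 | H : is_true (?u != ?v) |- context [?u == ?v] => rewrite (negbTE H)
 | H : is_true (?u != ?v) |- context [?v == ?u] => rewrite [v == u]eq_sym (negbTE H)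
 | |- context [?u == ?u] => rewrite eqxx
 end.

Ltac cases4 a b i1 i2 j1 j2 :=
  case: (eqVneq a i1) => ?; case: (eqVneq a i2) => ?;
  case: (eqVneq b j1) => ?; case: (eqVneq b j2) => ?; subst; simpl_eqs;
  rewrite ?andbT ?andbF ?andTb ?andFb /=.

Lemma natE (u z A B C D : nat) : (u + A + B = z + C + D -> u = z + C + D - A - B)%N.
Proof. lia. Qed.
Lemma natB (u z A B C D m : nat) :
  (u + A + B = z + C + D -> u < m.+1 -> z + C + D - A - B < m.+1)%N.
Proof. lia. Qed.

Notation quad := ('I_I * 'I_J * 'I_I * 'I_J)%type.

Definition mvn (q : quad) (a : 'I_I) (b : 'I_J) : nat :=
 let: (i1,j1,i2,j2) := q in
 (ent x a b + ((a == i1) && (b == j2)) + ((a == i2) && (b == j1))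
   - ((a == i1) && (b == j1)) - ((a == i2) && (b == j2)))%N.

Definition mv (q : quad) : table I J n := [ffun ab => inord (mvn q ab.1 ab.2)].

Definition valid (q : quad) : bool := let: (i1,j1,i2,j2) := q in
  [&& i1 != i2, j1 != j2, (0 < ent x i1 j1)%N & (0 < ent x i2 j2)%N].

Definition swapq (q : quad) : quad := let: (i1,j1,i2,j2) := q in (i2,j2,i1,j1).

Lemma row_le a b b' : b != b' -> (ent x a b + ent x a b' <= n)%N.
Proof.
move=> hb; move: hx; rewrite inE => /andP[/forallP hr _].
have := eqP (hr a).
have : (lam a <= n)%N by rewrite -(eqP hlam) (bigD1 a) //= leq_addr.
rewrite (bigD1 b) //= (bigD1 b') /=; last by rewrite eq_sym.
lia.
Qed.

Lemma is_move_sym q T' : is_move x q T' = is_move x (swapq q) T'.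
Proof.
case: q => [[[i1 j1] i2] j2] /=; rewrite /is_move.
congr (_ && (_ && _)); first (by rewrite eq_sym); first (by rewrite eq_sym).
apply: eq_forallb => a; apply: eq_forallb => b.
by rewrite [X in X == _]addnAC [X in _ == X]addnAC.
Qed.

Lemma mvn_le q a b : valid q -> (mvn q a b <= n)%N.
Proof.
case: q => [[[i1 j1] i2] j2] /= /and4P[hi hj p1 p2].
have h1 := @row_le i1 j1 j2 hj. have h2 : (ent x i2 j1 + ent x i2 j2 <= n)%N.
  by apply: row_le.
have hxab : (ent x a b < n.+1)%N by exact: ltn_ord.
cases4 a b i1 i2 j1 j2; lia.
Qed.

Lemma ent_mv q a b : valid q -> ent (mv q) a b = mvn q a b.
Proof. by move=> v; rewrite /ent ffunE /= inordK // ltnS mvn_le. Qed.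

Lemma is_move_mv q : valid q -> is_move x q (mv q).
Proof.
move=> v; have := v; case: q v => [[[i1 j1] i2] j2] v /= /and4P[hi hj p1 p2].
rewrite /is_move hi hj /=; apply/forallP => a; apply/forallP => b.
rewrite ent_mv //= ; apply/eqP; cases4 a b i1 i2 j1 j2; lia.
Qed.

Lemma is_moveP q T' : is_move x q T' = valid q && (T' == mv q).
Proof.
apply/idP/idP; last by case/andP => v /eqP ->; exact: is_move_mv.
move=> hm; have := hm.
case: q hm => [[[i1 j1] i2] j2] hm /and3P[hi hj /forallP h].
have e a b := eqP (forallP (h a) b).
have v : valid (i1, j1, i2, j2).
  rewrite /= hi hj /=; move: (e i1 j1) (e i2 j2); simpl_eqs; rewrite /=; lia.
rewrite v; apply/eqP/ffunP => -[a b]; apply: val_inj.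
rewrite ffunE /= inordK; last first.
  have H2 : (ent T' a b < n.+1)%N by exact: ltn_ord.
  move: (e a b) H2 => H1 H2; exact: natB H1 H2.
exact: natE (e a b).
Qed.

Lemma move_uniq q q' T' : is_move x q T' -> is_move x q' T' ->
  (q' == q) || (q' == swapq q).
Proof.
case: q => [[[i1 j1] i2] j2]; case: q' => [[[k1 l1] k2] l2].
move=> /and3P[hi hj /forallP h] /and3P[hk hl /forallP h'].
have e a b := eqP (forallP (h a) b).
have e' a b := eqP (forallP (h' a) b).
have H1 : ((i1 == k1) && (j1 == l1)) || ((i1 == k2) && (j1 == l2)).
  move: (e i1 j1) (e' i1 j1); simpl_eqs; rewrite /=.
  case: (i1 == k1); case: (j1 == l1); case: (i1 == k2); case: (j1 == l2);
    rewrite /= => //; lia.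
have H2 : ((i2 == k1) && (j2 == l1)) || ((i2 == k2) && (j2 == l2)).
  move: (e i2 j2) (e' i2 j2); simpl_eqs; rewrite /=.
  case: (i2 == k1); case: (j2 == l1); case: (i2 == k2); case: (j2 == l2);
    rewrite /= => //; lia.
case/orP: H1 => /andP[/eqP ? /eqP ?]; case/orP: H2 => /andP[/eqP ? /eqP ?];
  subst; simpl_eqs; by rewrite /= ?eqxx ?orbT.
Qed.

Definition w (q : quad) : R := let: (i1,j1,i2,j2) := q in
  (ent x i1 j1)%:R * (ent x i2 j2)%:R.

Lemma off_sum T' : rt_off R x T' =
  \sum_q (if is_move x q T' then w q / n%:R ^+ 2 else 0).
Proof.
rewrite /rt_off; case: pickP => [q0 hq0 | hn]; last first.
  by rewrite big1 // => q _; rewrite hn.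
have hs : is_move x (swapq q0) T' by rewrite -is_move_sym.
have hne : swapq q0 != q0.
  move: hq0 {hs}; case: q0 => [[[i1 j1] i2] j2] /and3P[hi _ _]; by rewrite /= !xpair_eqE (negbTE hi) /= ?andbF.
rewrite -(big_mkcond (fun q => is_move x q T')) (bigD1 q0) //= (bigD1 (swapq q0)) /=; last by rewrite hs hne.
rewrite big_pred0 => [|q]; last first.
  case hq: (is_move x q T') => //=.
  by case/orP: (@move_uniq q0 q T' hq0 hq) => ->; rewrite ?andbF.
move: hq0 hs hne => _ _ _; case: q0 => [[[i1 j1] i2] j2] /=; rewrite addr0; ring.
Qed.

Lemma sum_indr (c : bool) (j : 'I_J) : (\sum_(b < J) (c && (b == j)) = c)%N.
Proof.
rewrite (bigD1 j) //= eqxx andbT big1 ?addn0 // => b /negbTE ->; by rewrite andbF.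
Qed.

Lemma sum_indl (c : bool) (i : 'I_I) : (\sum_(a < I) ((a == i) && c) = c)%N.
Proof.
rewrite (bigD1 i) //= eqxx big1 ?addn0 // => a /negbTE ->; by [].
Qed.

Lemma mv_in q : valid q -> mv q \in tables n lam mu.
Proof.
move=> v; have hm := is_move_mv q v; move: hx; rewrite !inE.
case: q v hm => [[[i1 j1] i2] j2] v /and3P[_ _ /forallP h] /andP[/forallP hr /forallP hc].
have e a b := eqP (forallP (h a) b).
apply/andP; split; apply/forallP.
- move=> a; move: (hr a) => /eqP <-; apply/eqP.
  have H : (\sum_(b < J) (ent (mv (i1, j1, i2, j2)) a b + ((a == i1) && (b == j1)) + ((a == i2) && (b == j2)))
     = \sum_(b < J) (ent x a b + ((a == i1) && (b == j2)) + ((a == i2) && (b == j1))))%N.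
    by apply: eq_bigr => b _; exact: e.
  move: H; rewrite !big_split /= !sum_indr => H; clear -H; lia.
- move=> b; move: (hc b) => /eqP <-; apply/eqP.
  have H : (\sum_(a < I) (ent (mv (i1, j1, i2, j2)) a b + ((a == i1) && (b == j1)) + ((a == i2) && (b == j2)))
     = \sum_(a < I) (ent x a b + ((a == i1) && (b == j2)) + ((a == i2) && (b == j1))))%N.
    by apply: eq_bigr => a _; exact: e.
  move: H; rewrite !big_split /= !sum_indl => H; clear -H; lia.
Qed.

Lemma mv_neq q : valid q -> mv q != x.
Proof.
move=> v; have hm := is_move_mv q v; apply/eqP => ex; move: hm; rewrite ex.
case: q v {ex} => [[[i1 j1] i2] j2] /and4P[hi hj _ _] /and3P[_ _ /forallP h].
move: (eqP (forallP (h i1) j1)); simpl_eqs; rewrite /= => H; clear -H; lia.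
Qed.

Lemma rtE_formula (f : table I J n -> R) : rt_E lam mu x f =
  f x + \sum_q (if valid q then w q / n%:R ^+ 2 * (f (mv q) - f x) else 0).
Proof.
rewrite /rt_E (bigD1 x) //= /rt_P eqxx.
rewrite [X in _ + X](eq_bigr (fun T' => rt_off R x T' * f T')); last first.
  by move=> T' /andP[_ /negbTE ->].
rewrite mulrBl mul1r mulr_suml -addrA [- _ + _]addrC -sumrB; congr (_ + _).
rewrite (eq_bigr (fun T' => \sum_q (if is_move x q T' then w q / n%:R ^+ 2 * (f T' - f x) else 0))); last first.
  move=> T' _; rewrite -mulrBr off_sum mulr_suml; apply: eq_bigr => q _.
  by case: ifP; rewrite ?mul0r.
rewrite exchange_big /=; apply: eq_bigr => q _.
case v: (valid q); last first.
  by apply: big1 => T' _; rewrite is_moveP v.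
rewrite (bigD1 (mv q)) /=; last by rewrite mv_in // mv_neq.
rewrite is_moveP v eqxx /= big1 ?addr0 // => T' /andP[_ hne].
by rewrite is_moveP v (negbTE hne).
Qed.

Definition y (a : 'I_I) (b : 'I_J) : R := (ent x a b)%:R.
Definition dd (q : quad) (a : 'I_I) (b : 'I_J) : R := let: (i1,j1,i2,j2) := q in
  ((a == i1)%:R - (a == i2)%:R) * ((b == j2)%:R - (b == j1)%:R).

Lemma entR_mv q a b : valid q -> (ent (mv q) a b)%:R = y a b + dd q a b.
Proof.
move=> v; have := is_move_mv q v.
case: q v => [[[i1 j1] i2] j2] v /and3P[_ _ /forallP h].
have := congr1 (fun m => m%:R : R) (eqP (forallP (h a) b)).
rewrite /= !natrD -!mulnb !natrM /y => H.
apply/eqP; rewrite -subr_eq0; apply/eqP.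
set u := (ent (mv _) a b)%:R in H *.
transitivity ((u + (a == i1)%:R * (b == j1)%:R + (a == i2)%:R * (b == j2)%:R)
  - ((ent x a b)%:R + (a == i1)%:R * (b == j2)%:R + (a == i2)%:R * (b == j1)%:R)).
  ring.
by rewrite H subrr.
Qed.

Lemma rtE_poly (Phi : ('I_I -> 'I_J -> R) -> R) :
  (forall g h, (forall a b, g a b = h a b) -> Phi g = Phi h) ->
  rt_E lam mu x (fun T => Phi (fun a b => (ent T a b)%:R)) =
  Phi y + \sum_q w q / n%:R ^+ 2 * (Phi (fun a b => y a b + dd q a b) - Phi y).
Proof.
move=> Pext; rewrite rtE_formula; congr (_ + _); apply: eq_bigr => q _.
case: ifP => v.
  by congr (_ * (_ - _)); apply: Pext => a b; exact: entR_mv.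
case: q v => [[[i1 j1] i2] j2] /= v.
case: (eqVneq i1 i2) => [<-|hi].
  rewrite (Pext _ y) ?subrr ?mulr0 // => a b.
  by rewrite /= subrr mul0r addr0.
case: (eqVneq j1 j2) => [<-|hj].
  rewrite (Pext _ y) ?subrr ?mulr0 // => a b.
  by rewrite /= subrr mulr0 addr0.
move: v; rewrite hi hj /=; case: (eqVneq (ent x i1 j1) 0%N) => [->|h1] /=; first by rewrite mul0r !mul0r.
case: (eqVneq (ent x i2 j2) 0%N) => [->|h2] /=; first by rewrite mulr0 !mul0r.
by rewrite !lt0n h1 h2.
Qed.

Lemma sumq (F : quad -> R) : \sum_q F q =
  \sum_(i1 < I) \sum_(j1 < J) \sum_(i2 < I) \sum_(j2 < J) F (i1, j1, i2, j2).
Proof.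
by rewrite !pair_bigA /=; apply: eq_bigr => -[[[? ?] ?] ?].
Qed.


Definition S4 (F : 'I_I -> 'I_J -> 'I_I -> 'I_J -> R) : R :=
  \sum_(i1 < I) \sum_(j1 < J) \sum_(i2 < I) \sum_(j2 < J) F i1 j1 i2 j2.

Lemma S4ext F G : (forall a b c d, F a b c d = G a b c d) -> S4 F = S4 G.
Proof.
move=> e; apply: eq_bigr => ? _; apply: eq_bigr => ? _; apply: eq_bigr => ? _.
by apply: eq_bigr => ? _.
Qed.

Lemma S4D F G : S4 (fun a b c d => F a b c d + G a b c d) = S4 F + S4 G.
Proof.
rewrite /S4 -big_split; apply: eq_bigr => ? _; rewrite -big_split.
apply: eq_bigr => ? _; rewrite -big_split; apply: eq_bigr => ? _.
by rewrite -big_split.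
Qed.

Lemma S4B F G : S4 (fun a b c d => F a b c d - G a b c d) = S4 F - S4 G.
Proof.
rewrite /S4 -sumrB; apply: eq_bigr => ? _; rewrite -sumrB.
apply: eq_bigr => ? _; rewrite -sumrB; apply: eq_bigr => ? _.
by rewrite -sumrB.
Qed.

Lemma S4Z k F : S4 (fun a b c d => k * F a b c d) = k * S4 F.
Proof.
rewrite /S4 mulr_sumr; apply: eq_bigr => ? _; rewrite mulr_sumr.
apply: eq_bigr => ? _; rewrite mulr_sumr; apply: eq_bigr => ? _.
by rewrite mulr_sumr.
Qed.

Lemma S4N F : S4 (fun a b c d => - F a b c d) = - S4 F.
Proof.
rewrite /S4 -sumrN; apply: eq_bigr => ? _; rewrite -sumrN.
apply: eq_bigr => ? _; rewrite -sumrN; apply: eq_bigr => ? _.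
by rewrite -sumrN.
Qed.

Definition G (phi : 'I_I -> 'I_J -> R) : R := \sum_(r < I) \sum_(s < J) y r s * phi r s.

Lemma S4M phi psi :
  S4 (fun a b c d => (y a b * phi a b) * (y c d * psi c d)) = G phi * G psi.
Proof.
rewrite /S4 /G mulr_suml; apply: eq_bigr => ? _; rewrite mulr_suml.
apply: eq_bigr => ? _; rewrite mulr_sumr; apply: eq_bigr => ? _.
by rewrite mulr_sumr.
Qed.

Lemma rowR a : \sum_(s < J) y a s = (lam a)%:R.
Proof.
move: hx; rewrite inE => /andP[/forallP hr _].
by rewrite /y -natr_sum (eqP (hr a)).
Qed.

Lemma colR b : \sum_(r < I) y r b = (mu b)%:R.
Proof.
move: hx; rewrite inE => /andP[_ /forallP hc].
by rewrite /y -natr_sum (eqP (hc b)).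
Qed.

Lemma G1 : G (fun _ _ => 1) = n%:R.
Proof.
rewrite /G (eq_bigr (fun r => (lam r)%:R)); first by rewrite -natr_sum (eqP hlam).
by move=> r _; rewrite -rowR; apply: eq_bigr => s _; rewrite mulr1.
Qed.

Lemma Gr a : G (fun r _ => (r == a)%:R) = (lam a)%:R.
Proof.
rewrite /G (bigD1 a) //= [X in _ + X]big1 ?addr0.
  by rewrite -rowR; apply: eq_bigr => s _; rewrite eqxx mulr1.
by move=> r /negbTE ne; apply: big1 => s _; rewrite ne mulr0.
Qed.

Lemma Gc b : G (fun _ s => (s == b)%:R) = (mu b)%:R.
Proof.
rewrite /G exchange_big (bigD1 b) //= [X in _ + X]big1 ?addr0.
  by rewrite -colR; apply: eq_bigr => s _; rewrite eqxx mulr1.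
by move=> r /negbTE ne; apply: big1 => s _; rewrite ne mulr0.
Qed.

Lemma Grc a b : G (fun r s => (r == a)%:R * (s == b)%:R) = y a b.
Proof.
rewrite /G (bigD1 a) //= [X in _ + X]big1 ?addr0; last first.
  by move=> r /negbTE ne; apply: big1 => s _; rewrite ne mul0r mulr0.
rewrite (bigD1 b) //= [X in _ + X]big1 ?addr0; last first.
  by move=> s /negbTE ne; rewrite ne mulr0 mulr0.
by rewrite !eqxx mulr1 mulr1.
Qed.


Ltac split3 v a b := case: (eqVneq v a) => [->|?]; last case: (eqVneq v b) => [->|?].

Lemma sumqS4 (F : quad -> R) : \sum_q F q = S4 (fun a b c d => F (a, b, c, d)).
Proof. exact: sumq. Qed.

Lemma case1 (i k : 'I_I) (j l : 'I_J) : n%:R != 0 :> R -> i != k -> j != l ->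
  rt_E lam mu x (fun T => (ent T i j)%:R * (ent T k l)%:R)
  = y i j * y k l * (1 - 4 / n%:R + 2 / n%:R ^+ 2)
    + 2 / n%:R ^+ 2 * (y k l * (lam i)%:R * (mu j)%:R + y i j * (lam k)%:R * (mu l)%:R
                       + y i l * y k j).
Proof.
move=> n0 hik hjl.
rewrite (rtE_poly (fun g => g i j * g k l)); last by move=> g h e; rewrite !e.
rewrite sumqS4.
rewrite (@S4ext _ (fun i1 j1 i2 j2 => (n%:R ^+ 2)^-1 * (
   y i j * ( (y i1 j1 * (i1 == k)%:R) * (y i2 j2 * (j2 == l)%:R)
           - (y i1 j1 * ((i1 == k)%:R * (j1 == l)%:R)) * (y i2 j2 * 1)
           - (y i1 j1 * 1) * (y i2 j2 * ((i2 == k)%:R * (j2 == l)%:R))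
           + (y i1 j1 * (j1 == l)%:R) * (y i2 j2 * (i2 == k)%:R) )
 + y k l * ( (y i1 j1 * (i1 == i)%:R) * (y i2 j2 * (j2 == j)%:R)
           - (y i1 j1 * ((i1 == i)%:R * (j1 == j)%:R)) * (y i2 j2 * 1)
           - (y i1 j1 * 1) * (y i2 j2 * ((i2 == i)%:R * (j2 == j)%:R))
           + (y i1 j1 * (j1 == j)%:R) * (y i2 j2 * (i2 == i)%:R) )
 + (y i1 j1 * ((i1 == i)%:R * (j1 == l)%:R)) * (y i2 j2 * ((i2 == k)%:R * (j2 == j)%:R))
 + (y i1 j1 * ((i1 == i)%:R * (j1 == j)%:R)) * (y i2 j2 * ((i2 == k)%:R * (j2 == l)%:R))
 + (y i1 j1 * ((i1 == k)%:R * (j1 == l)%:R)) * (y i2 j2 * ((i2 == i)%:R * (j2 == j)%:R))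
 + (y i1 j1 * ((i1 == k)%:R * (j1 == j)%:R)) * (y i2 j2 * ((i2 == i)%:R * (j2 == l)%:R))))); last first.
  move=> i1 j1 i2 j2; rewrite /w /dd /=.
  split3 i1 i k; split3 i2 i k; split3 j1 j l; split3 j2 j l; simpl_eqs; rewrite /=; ring.
rewrite S4Z.
do 6 rewrite ?S4D ?S4N ?S4Z.
rewrite !S4M G1 !Gr !Gc !Grc.
field.
by [].
Qed.

Ltac split2 v a := case: (eqVneq v a) => [->|?].

Lemma case2 (i k : 'I_I) (j : 'I_J) : n%:R != 0 :> R -> i != k ->
  rt_E lam mu x (fun T => (ent T i j)%:R * (ent T k j)%:R)
  = y i j * y k j * (1 - 4 / n%:R + 4 / n%:R ^+ 2)
    + 2 / n%:R ^+ 2 * (y k j * ((lam i)%:R * (mu j)%:R - (lam i)%:R)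
                       + y i j * ((lam k)%:R * (mu j)%:R - (lam k)%:R)).
Proof.
move=> n0 hik.
rewrite (rtE_poly (fun g => g i j * g k j)); last by move=> g h e; rewrite !e.
rewrite sumqS4.
rewrite (@S4ext _ (fun i1 j1 i2 j2 => (n%:R ^+ 2)^-1 * (
   y i j * ( (y i1 j1 * (i1 == k)%:R) * (y i2 j2 * (j2 == j)%:R)
           - (y i1 j1 * ((i1 == k)%:R * (j1 == j)%:R)) * (y i2 j2 * 1)
           - (y i1 j1 * 1) * (y i2 j2 * ((i2 == k)%:R * (j2 == j)%:R))
           + (y i1 j1 * (j1 == j)%:R) * (y i2 j2 * (i2 == k)%:R) )
 + y k j * ( (y i1 j1 * (i1 == i)%:R) * (y i2 j2 * (j2 == j)%:R)
           - (y i1 j1 * ((i1 == i)%:R * (j1 == j)%:R)) * (y i2 j2 * 1)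
           - (y i1 j1 * 1) * (y i2 j2 * ((i2 == i)%:R * (j2 == j)%:R))
           + (y i1 j1 * (j1 == j)%:R) * (y i2 j2 * (i2 == i)%:R) )
 - (y i1 j1 * ((i1 == i)%:R * (j1 == j)%:R)) * (y i2 j2 * (i2 == k)%:R)
 - (y i1 j1 * (i1 == i)%:R) * (y i2 j2 * ((i2 == k)%:R * (j2 == j)%:R))
 + 2 * ((y i1 j1 * ((i1 == i)%:R * (j1 == j)%:R)) * (y i2 j2 * ((i2 == k)%:R * (j2 == j)%:R)))
 - (y i1 j1 * ((i1 == k)%:R * (j1 == j)%:R)) * (y i2 j2 * (i2 == i)%:R)
 - (y i1 j1 * (i1 == k)%:R) * (y i2 j2 * ((i2 == i)%:R * (j2 == j)%:R))
 + 2 * ((y i1 j1 * ((i1 == k)%:R * (j1 == j)%:R)) * (y i2 j2 * ((i2 == i)%:R * (j2 == j)%:R)))))); last first.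
  move=> i1 j1 i2 j2; rewrite /w /dd /=.
  split3 i1 i k; split3 i2 i k; split2 j1 j; split2 j2 j; simpl_eqs; rewrite /=; ring.
rewrite S4Z.
do 6 rewrite ?S4D ?S4N ?S4Z.
rewrite !S4M G1 !Gr !Gc !Grc.
by field.
Qed.

Lemma case3 (i : 'I_I) (j : 'I_J) : n%:R != 0 :> R ->
  rt_E lam mu x (fun T => (ent T i j)%:R ^+ 2)
  = y i j ^+ 2 * (1 - 4 / n%:R + 4 / n%:R ^+ 2)
    + 2 / n%:R ^+ 2 * (y i j * (2 * (lam i)%:R * (mu j)%:R - 2 * (lam i)%:R - 2 * (mu j)%:R + n%:R)
                       + (lam i)%:R * (mu j)%:R).
Proof.
move=> n0.
rewrite (rtE_poly (fun g => g i j ^+ 2)); last by move=> g h e; rewrite !e.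
rewrite sumqS4.
rewrite (@S4ext _ (fun i1 j1 i2 j2 => (n%:R ^+ 2)^-1 * (
   2 * y i j * ( (y i1 j1 * (i1 == i)%:R) * (y i2 j2 * (j2 == j)%:R)
           - (y i1 j1 * ((i1 == i)%:R * (j1 == j)%:R)) * (y i2 j2 * 1)
           - (y i1 j1 * 1) * (y i2 j2 * ((i2 == i)%:R * (j2 == j)%:R))
           + (y i1 j1 * (j1 == j)%:R) * (y i2 j2 * (i2 == i)%:R) )
 + (y i1 j1 * ((i1 == i)%:R * (j1 == j)%:R)) * (y i2 j2 * 1)
 + (y i1 j1 * (i1 == i)%:R) * (y i2 j2 * (j2 == j)%:R)
 - 2 * ((y i1 j1 * ((i1 == i)%:R * (j1 == j)%:R)) * (y i2 j2 * (j2 == j)%:R))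
 + (y i1 j1 * (j1 == j)%:R) * (y i2 j2 * (i2 == i)%:R)
 + (y i1 j1 * 1) * (y i2 j2 * ((i2 == i)%:R * (j2 == j)%:R))
 - 2 * ((y i1 j1 * (j1 == j)%:R) * (y i2 j2 * ((i2 == i)%:R * (j2 == j)%:R)))
 - 2 * ((y i1 j1 * ((i1 == i)%:R * (j1 == j)%:R)) * (y i2 j2 * (i2 == i)%:R))
 - 2 * ((y i1 j1 * (i1 == i)%:R) * (y i2 j2 * ((i2 == i)%:R * (j2 == j)%:R)))
 + 4 * ((y i1 j1 * ((i1 == i)%:R * (j1 == j)%:R)) * (y i2 j2 * ((i2 == i)%:R * (j2 == j)%:R)))))); last first.
  move=> i1 j1 i2 j2; rewrite /w /dd /=.
  split2 i1 i; split2 i2 i; split2 j1 j; split2 j2 j; simpl_eqs; rewrite /=; ring.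
rewrite S4Z.
do 6 rewrite ?S4D ?S4N ?S4Z.
rewrite !S4M G1 !Gr !Gc !Grc.
by field.
Qed.

End S.


Theorem lemma3p4 (R : realFieldType) (n I J : nat)
  (lam : 'I_I -> nat) (mu : 'I_J -> nat) :
  is_partition n lam -> is_partition n mu ->
  forall x : table I J n, x \in tables n lam mu ->
  forall (i k : 'I_I) (j l : 'I_J),
  let N : R := n%:R in
  let X (a : 'I_I) (b : 'I_J) : R := (ent x a b)%:R in
  let L (a : 'I_I) : R := (lam a)%:R in
  let M (b : 'I_J) : R := (mu b)%:R in
  [/\ (i != k -> j != l ->
        rt_E lam mu x (fun T => (ent T i j)%:R * (ent T k l)%:R)
        = X i j * X k l * (1 - 4 / N + 2 / N ^+ 2)
          + 2 / N ^+ 2 * (X k l * L i * M j + X i j * L k * M l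
                          + X i l * X k j)),
      (i != k ->
        rt_E lam mu x (fun T => (ent T i j)%:R * (ent T k j)%:R)
        = X i j * X k j * (1 - 4 / N + 4 / N ^+ 2)
          + 2 / N ^+ 2 * (X k j * (L i * M j - L i)
                          + X i j * (L k * M j - L k))) &
      rt_E lam mu x (fun T => (ent T i j)%:R ^+ 2)
        = X i j ^+ 2 * (1 - 4 / N + 4 / N ^+ 2)
          + 2 / N ^+ 2 * (X i j * (2 * L i * M j - 2 * L i - 2 * M j + N)
                          + L i * M j)].
Proof.
move=> [hl hpos _] _ x hx i k j l N X L M.
have hlam : (\sum_(i < I) lam i == n)%N by apply/eqP.
have n0 : N != 0.
  rewrite /N pnatr_eq0 -lt0n; apply: leq_trans (hpos i) _.
  by rewrite -hl (bigD1 i) //= leq_addr.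
split.
- by move=> hik hjl; apply: case1.
- by move=> hik; apply: case2.
- exact: case3.
Qed.
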